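(* For $n=2,3,\dots$ let $\Omega_n=\{1,\dots,n\}$, $\mathcal P_n=\mathcal P(\Omega_n)$ and $g_n$ the Fisher co-metric on $\mathcal P_n$. Let $\{h_n\}_{n\ge2}$ be given, where $h_n$ is a contravariant tensor field of degree 2 on $\mathcal P_n$ mapping each $p\in\mathcal P_n$ continuously to a non-degenerate symmetric bilinear form $h_{n,p}:T_p^*(\mathcal P_n)^2\to\mathbb R$. The following are equivalent: (i) there is $c\in\mathbb R\setminus\{0\}$ with $h_n=c\,g_n$ for all $n$; (ii) for all $m\le n$ and every pair of a Markov embedding $\Phi:\mathcal P_m\to\mathcal P_n$ and a Markov co-embedding $\Psi:\mathcal P_n\to\mathcal P_m$ with $\Psi\circ\Phi=\mathrm{id}_{\mathcal P_m}$, $$h_{m,p}(\alpha_p,\Phi^*_p\beta_{\Phi(p)})=h_{n,\Phi(p)}(\Psi^*_{\Phi(p)}\alpha_p,\beta_{\Phi(p)})\quad\forall p\in\mathcal P_m,\ \alpha_p\in T^*_p(\mathcal P_m),\ \beta_{\Phi(p)}\in T^*_{\Phi(p)}(\mathcal P_n).$$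
   Context: $\mathcal P(\Omega)$ is the manifold of strictly positive probability distributions on a finite set $\Omega$. The Fisher co-metric on $T^*_p(\mathcal P(\Omega))$ is $g_p((d\langle A\rangle)_p,(d\langle B\rangle)_p)=\mathrm{Cov}_p(A,B)$, where $\langle A\rangle(p)=\sum_\omega p(\omega)A(\omega)$. A Markov map $\mathcal P_m\to\mathcal P_n$ is a map $p\mapsto\sum_xW(\cdot|x)p(x)$ for a channel $W$ with $\forall y\,\exists x\,W(y|x)>0$. A Markov map $\Phi$ is a Markov embedding if some Markov map $\Psi$ satisfies $\Psi\circ\Phi=\mathrm{id}$; such $\Psi$ is a Markov co-embedding. $\Phi^*_p$, $\Psi^*_q$ denote transposes of the differentials $(d\Phi)_p$, $(d\Psi)_q$. *)

(* Defs.v *)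
From HB Require Import structures.
From mathcomp Require Import all_boot all_order all_algebra.
From mathcomp Require Import reals.
Set Implicit Arguments. Unset Strict Implicit. Unset Printing Implicit Defensive.
Import Order.TTheory GRing.Theory Num.Theory.
Local Open Scope ring_scope.

Section Defs.
Variable R : realType.

Definition in_simplex n (p : 'I_n -> R) : Prop :=
  (forall i, 0 < p i) /\ \sum_i p i = 1.

(* A covector (d<A>)_p in T_p^*(P_n) is represented by A : 'I_n -> R,
   two representatives giving the same covector iff they differ by a
   constant.  A bilinear form on T_p^*(P_n) is thus a bilinear form on
   representatives that is invariant under adding constants. *)
Definition cotangent_bilinear n (b : ('I_n -> R) -> ('I_n -> R) -> R) : Prop :=
  [/\ forall (a : R) A A' B, b (fun i => a * A i + A' i) B = a * b A B + b A' B,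
      forall (a : R) A B B', b A (fun i => a * B i + B' i) = a * b A B + b A B',
      forall (c : R) A B, b (fun i => A i + c) B = b A B &
      forall (c : R) A B, b A (fun i => B i + c) = b A B].

Definition cotangent_symmetric n (b : ('I_n -> R) -> ('I_n -> R) -> R) : Prop :=
  forall A B, b A B = b B A.

Definition nondegenerate_form n (b : ('I_n -> R) -> ('I_n -> R) -> R) : Prop :=
  forall A, (forall B, b A B = 0) -> exists c : R, forall i, A i = c.

Definition continuous_on_simplex n (f : ('I_n -> R) -> R) : Prop :=
  forall p, in_simplex p -> forall eps : R, 0 < eps ->
    exists2 delta : R, 0 < delta &
      forall q, in_simplex q -> (forall i, `|q i - p i| < delta) ->
        `|f q - f p| < eps.

(* Fisher co-metric: g_p(dA, dB) = Cov_p(A, B) *)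
Definition fisher n (p A B : 'I_n -> R) : R :=
  \sum_i p i * A i * B i - (\sum_i p i * A i) * (\sum_i p i * B i).

(* channel W with W x y = W(y|x), defining a Markov map P_m -> P_n *)
Definition markov_channel m n (W : 'I_m -> 'I_n -> R) : Prop :=
  [/\ forall x y, 0 <= W x y,
      forall x, \sum_y W x y = 1 &
      forall y, exists x, 0 < W x y].

Definition markov_map m n (W : 'I_m -> 'I_n -> R) (p : 'I_m -> R) : 'I_n -> R :=
  fun y => \sum_x W x y * p x.

(* transpose of the differential of the Markov map acting on covector
   representatives: (Phi^*_p (dB))(x) = sum_y W(y|x) B(y) *)
Definition markov_pullback m n (W : 'I_m -> 'I_n -> R) (B : 'I_n -> R) : 'I_m -> R :=
  fun x => \sum_y W x y * B y.

End Defs.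

(* Main.v *)
Require Import Defs.
From HB Require Import structures.
From mathcomp Require Import all_boot all_order all_algebra all_fingroup.
From mathcomp Require Import reals.
From Stdlib Require Import FunctionalExtensionality.
From mathcomp Require Import lra ring.
Import Order.TTheory GRing.Theory Num.Theory.
Local Open Scope ring_scope.
Set Implicit Arguments. Unset Strict Implicit. Unset Printing Implicit Defensive.


Section Gen.
Variable R : realType.

Lemma sum_ind n (a : 'I_n) (F : 'I_n -> R) : \sum_y (y == a)%:R * F y = F a.
Proof.
rewrite (bigD1 a) //= eqxx mul1r big1 ?addr0 // => y /negbTE ->; by rewrite mul0r.
Qed.

Lemma sum_indr n (a : 'I_n) (F : 'I_n -> R) : \sum_y F y * (y == a)%:R = F a.
Proof. rewrite -[RHS](sum_ind a); apply: eq_bigr => y _; by rewrite mulrC. Qed.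

Definition ee n (k : 'I_n) : 'I_n -> R := fun x => (x == k)%:R.

Lemma lin_zero n (F : ('I_n -> R) -> R)
  (HF : forall (a : R) A A', F (fun i => a * A i + A' i) = a * F A + F A') :
  F (fun _ => 0) = 0.
Proof.
have := HF 1 (fun _ => 0) (fun _ => 0).
have -> : (fun i : 'I_n => 1 * (fun _ : 'I_n => (0:R)) i + (fun _ => 0) i) = (fun _ => 0).
  by apply: functional_extensionality => i; rewrite mul1r addr0.
rewrite mul1r => H; lra.
Qed.

Lemma lin_expand n (F : ('I_n -> R) -> R)
  (HF : forall (a : R) A A', F (fun i => a * A i + A' i) = a * F A + F A') A :
  F A = \sum_i A i * F (ee i).
Proof.
have EA : A = (fun x => \sum_(i <- index_enum 'I_n) A i * ee i x).
  apply: functional_extensionality => x; rewrite /ee.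
  under eq_bigr => i _ do rewrite eq_sym.
  by rewrite sum_indr.
rewrite {1}EA.
elim: (index_enum 'I_n) => [|a r IH].
  rewrite big_nil.
  have -> : (fun x : 'I_n => \sum_(i <- [::]) A i * ee i x) = (fun _ => 0).
    by apply: functional_extensionality => x; rewrite big_nil.
  exact: lin_zero.
rewrite big_cons -IH.
have -> : (fun x : 'I_n => \sum_(i <- a :: r) A i * ee i x) =
   (fun x => A a * ee a x + (fun x => \sum_(i <- r) A i * ee i x) x).
  by apply: functional_extensionality => x; rewrite big_cons.
by rewrite HF.
Qed.

Lemma markov_simplex m n (W : 'I_m -> 'I_n -> R) p :
  markov_channel W -> in_simplex p -> in_simplex (markov_map W p).
Proof.
move=> [W0 W1 W2] [p0 p1]; split.
  move=> y; have [x Hx] := W2 y; rewrite /markov_map (bigD1 x) //=.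
  rewrite ltr_wpDr ?mulr_gt0 // sumr_ge0 // => i _.
  by rewrite mulr_ge0 // ltW.
rewrite /markov_map exchange_big /= -[RHS]p1; apply: eq_bigr => x _.
by rewrite -mulr_suml W1 mul1r.
Qed.

End Gen.
Arguments ee {R n}.

Section FI.
Variable R : realType.
Lemma sum_ind1 k (a : 'I_k) : \sum_y ((y == a)%:R : R) = 1.
Proof. by rewrite -[RHS](sum_ind a (fun _ => 1)); apply: eq_bigr => y _; rewrite mulr1. Qed.

Variables (m n : nat) (W : 'I_m -> 'I_n -> R) (V : 'I_n -> 'I_m -> R).
Hypothesis HW : markov_channel W.
Hypothesis HV : markov_channel V.
Hypothesis HVW : forall p : 'I_m -> R, in_simplex p ->
  forall x, markov_map V (markov_map W p) x = p x.

Lemma VW_id (p : 'I_m -> R) : in_simplex p ->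
  forall x0 x, \sum_y W x0 y * V y x = (x == x0)%:R.
Proof.
move=> [p0 p1] x0 x.
pose p' := fun i => (p i + (i == x0)%:R) / 2.
have sp' : in_simplex p'.
  split=> [i|]; first by rewrite /p' divr_gt0 // ltr_wpDr ?ler0n.
  rewrite /p' -mulr_suml big_split /= p1 sum_ind1; lra.
have := HVW sp' x; have := HVW (conj p0 p1) x.
rewrite /markov_map /p' => E1 E2.
have : \sum_y V y x * (\sum_x1 W x1 y * ((p x1 + (x1 == x0)%:R) / 2))
   = (\sum_y V y x * (\sum_x1 W x1 y * p x1)) / 2 + (\sum_y W x0 y * V y x) / 2.
  rewrite !mulr_suml.
  transitivity (\sum_y (V y x * (\sum_x1 W x1 y * p x1) / 2 + W x0 y * V y x / 2));
    last by rewrite big_split.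
  apply: eq_bigr => y _.
  have -> : \sum_x1 W x1 y * ((p x1 + (x1 == x0)%:R) / 2) =
      (\sum_x1 W x1 y * p x1) / 2 + W x0 y / 2.
    rewrite (eq_bigr (fun x1 => W x1 y * p x1 / 2 + W x1 y * (x1 == x0)%:R / 2));
      last by move=> *; ring.
    by rewrite big_split /= -!mulr_suml sum_indr.
  ring.
rewrite E2 E1 => H; lra.
Qed.

Lemma V_struct (p : 'I_m -> R) : in_simplex p ->
  forall x0 y, 0 < W x0 y -> forall x, V y x = (x == x0)%:R.
Proof.
move=> sp x0 y Wpos x.
have [W0 W1 _] := HW; have [V0 V1 _] := HV.
have Vle1 : forall y x, V y x <= 1.
  move=> y1 x1; rewrite -(V1 y1) (bigD1 x1) //= lerDl sumr_ge0 //.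
have E := VW_id sp x0 x0; rewrite eqxx in E.
have S0 : \sum_y W x0 y * (1 - V y x0) = 0.
  under eq_bigr => i _ do rewrite mulrBr mulr1.
  by rewrite sumrB W1 E subrr.
have /psumr_eq0P H : forall i, true -> 0 <= W x0 i * (1 - V i x0).
  by move=> i _; rewrite mulr_ge0 // subr_ge0.
have Vy1 : V y x0 = 1.
  have := H S0 y isT => /eqP; rewrite mulf_eq0 (gt_eqF Wpos) /= subr_eq0 => /eqP.
  by [].
have [->|nx] := eqVneq x x0; first by rewrite Vy1.
have := V1 y; rewrite (bigD1 x0) //= Vy1 => E5.
have S : \sum_(i | i != x0) V y i = 0 by lra.
move/psumr_eq0P: S => H2; rewrite ?(negbTE nx) H2 //.

Qed.

Lemma term_lemma (p : 'I_m -> R) : in_simplex p ->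
  forall x0 y (A : 'I_m -> R), W x0 y * (\sum_x V y x * A x) = W x0 y * A x0.
Proof.
move=> sp x0 y A; have [W0 _ _] := HW.
have [->|Wn] := eqVneq (W x0 y) 0; first by rewrite !mul0r.
have Wpos : 0 < W x0 y by rewrite lt_neqAle eq_sym Wn W0.
under eq_bigr => x _ do rewrite (V_struct sp Wpos x).
by rewrite sum_ind.
Qed.

Lemma fisher_inv (p : 'I_m -> R) : in_simplex p -> forall A B,
  fisher p A (markov_pullback W B) = fisher (markov_map W p) (markov_pullback V A) B.
Proof.
move=> sp A B; have [W0 W1 _] := HW.
rewrite /fisher /markov_map /markov_pullback.
have E3 : \sum_y (\sum_x W x y * p x) * B y = \sum_x p x * (\sum_y W x y * B y).
  rewrite (eq_bigr (fun y => \sum_x W x y * p x * B y)); last first.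
    by move=> y _; rewrite mulr_suml.
  rewrite exchange_big /=; apply: eq_bigr => x _; rewrite mulr_sumr.
  by apply: eq_bigr => y _; ring.
have E2 : \sum_y (\sum_x W x y * p x) * (\sum_x' V y x' * A x') = \sum_x p x * A x.
  rewrite (eq_bigr (fun y => \sum_x W x y * p x * A x)); last first.
    move=> y _; rewrite mulr_suml; apply: eq_bigr => x _.
    by rewrite mulrAC (term_lemma sp) mulrAC.
  rewrite exchange_big /=; apply: eq_bigr => x _.
  by rewrite -!mulr_suml W1 mul1r.
have E1 : \sum_y (\sum_x W x y * p x) * (\sum_x' V y x' * A x') * B y
    = \sum_x p x * A x * (\sum_y W x y * B y).
  rewrite (eq_bigr (fun y => \sum_x W x y * p x * A x * B y)); last first.
    move=> y _; rewrite mulr_suml mulr_suml; apply: eq_bigr => x _.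
    transitivity (p x * B y * (W x y * \sum_x' V y x' * A x')); first by ring.
    rewrite (term_lemma sp); ring.
  rewrite exchange_big /=; apply: eq_bigr => x _; rewrite mulr_sumr.
  by apply: eq_bigr => y _; ring.
by rewrite E1 E2 E3.
Qed.

End FI.

Lemma fiber_exists (R : realType) m (k : 'I_m -> nat) :
  exists N (f : 'I_N -> 'I_m), N = (\sum_i k i)%N /\
    forall i, \sum_y ((f y == i)%:R : R) = (k i)%:R.
Proof.
pose T := {i : 'I_m & 'I_(k i)}.
exists #|{: T}|, (fun y => tag (@enum_val T predT y)); split.
  by rewrite card_tagged sumnE big_map big_enum /=; apply: eq_bigr => i _; rewrite card_ord.
move=> i.
have -> : \sum_(y < #|{: T}|) ((tag (@enum_val T predT y) == i)%:R : R)
        = \sum_(t : T) ((tag t == i)%:R : R).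
  rewrite (reindex (@enum_val T predT)) //=.
  exists (@enum_rank T) => y _; [exact: enum_valK | exact: enum_rankK].
rewrite -(sig_big_dep (fun _ => true) (fun _ _ => true) (fun j (_ : 'I_(k j)) => ((j == i)%:R : R))) /=.
rewrite (eq_bigr (fun j => (k j)%:R * (j == i)%:R)); last first.
  by move=> j _; rewrite sumr_const card_ord mulr_natl.
by rewrite sum_indr.
Qed.

Section Approx.
Variable R : realType.

Lemma simplex_le1 n (q : 'I_n -> R) : in_simplex q -> forall i, 0 <= q i <= 1.
Proof.
move=> [q0 q1] i; rewrite ltW //= -q1 (bigD1 i) //= lerDl sumr_ge0 // => j _.
exact: ltW.
Qed.

Lemma sum_abs_le n (q : 'I_n -> R) (C : 'I_n -> R) : in_simplex q ->
  `|\sum_i q i * C i| <= \sum_i `|C i|.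
Proof.
move=> sq; apply: le_trans (ler_norm_sum _ _ _) _; apply: ler_sum => i _.
have /andP[q0 q1] := simplex_le1 sq i.
by rewrite normrM ger0_norm // ler_piMl.
Qed.

Lemma sum_diff_le n (p q : 'I_n -> R) (C : 'I_n -> R) d :
  (forall i, `|q i - p i| <= d) ->
  `|\sum_i q i * C i - \sum_i p i * C i| <= d * \sum_i `|C i|.
Proof.
move=> Hd; rewrite -sumrB mulr_sumr; apply: le_trans (ler_norm_sum _ _ _) _.
apply: ler_sum => i _; rewrite -mulrBl normrM; apply: ler_wpM2r => //.
Qed.

Definition lipK n (A B : 'I_n -> R) :=
  \sum_i `|A i * B i| + 2 * ((\sum_i `|A i|) * (\sum_i `|B i|)).

Lemma fisher_lip n (p q : 'I_n -> R) A B d : in_simplex p -> in_simplex q ->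
  (forall i, `|q i - p i| <= d) ->
  `|fisher q A B - fisher p A B| <= d * lipK A B.
Proof.
move=> sp sq Hd; rewrite /fisher /lipK.
have d0 : 0 <= d.
  move: sp Hd; clear; case: n p q => [|n'] p q [_ p1] Hd'.
    by move: p1; rewrite big_ord0 => /eqP; rewrite eq_sym oner_eq0.
  exact: le_trans (Hd' ord0).
set X1 := \sum_i q i * A i * B i; set X0 := \sum_i p i * A i * B i.
set Aq := \sum_i q i * A i; set Ap := \sum_i p i * A i.
set Bq := \sum_i q i * B i; set Bp := \sum_i p i * B i.
have E1 : `|X1 - X0| <= d * \sum_i `|A i * B i|.
  rewrite /X1 /X0 (eq_bigr (fun i => q i * (A i * B i))) ?(eq_bigr (fun i => p i * (A i * B i)) (fun i _ => esym (mulrA _ _ _)))//; last by move=> i _; rewrite mulrA.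
  exact: sum_diff_le.
have EA : `|Aq - Ap| <= d * \sum_i `|A i| by exact: sum_diff_le.
have EB : `|Bq - Bp| <= d * \sum_i `|B i| by exact: sum_diff_le.
have BA : `|Bq| <= \sum_i `|B i| by exact: sum_abs_le.
have AA : `|Ap| <= \sum_i `|A i| by exact: sum_abs_le.
have -> : X1 - Aq * Bq - (X0 - Ap * Bp) = (X1 - X0) - ((Aq - Ap) * Bq + Ap * (Bq - Bp)) by ring.
apply: le_trans (ler_normB _ _) _.
apply: le_trans (lerD E1 (le_trans (ler_normD _ _) (lerD (x := `|(Aq - Ap) * Bq|) (le_refl _) (le_refl _)))) _.
rewrite !normrM.
have SA0 : 0 <= \sum_i `|A i| by rewrite sumr_ge0.
have SB0 : 0 <= \sum_i `|B i| by rewrite sumr_ge0.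
have T1 : `|Aq - Ap| * `|Bq| <= d * (\sum_i `|A i|) * (\sum_i `|B i|).
  by apply: ler_pM.
have T2 : `|Ap| * `|Bq - Bp| <= (\sum_i `|A i|) * (d * \sum_i `|B i|).
  by apply: ler_pM.
set SAB := \sum_i `|A i * B i| in E1 *.
set SA := \sum_i `|A i| in SA0 T1 T2 *; set SB := \sum_i `|B i| in SB0 T1 T2 *.
rewrite mulrDr; apply: lerD => //.
have -> : d * (2 * (SA * SB)) = d * SA * SB + SA * (d * SB) by ring.
exact: lerD.
Qed.

End Approx.

Section Approx2.
Variable R : realType.

Lemma simplex_pos m (p : 'I_m -> R) : in_simplex p -> (0 < m)%N.
Proof.
case: m p => // p [_]; rewrite big_ord0 => /eqP; by rewrite eq_sym oner_eq0.
Qed.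

Lemma approx m (p : 'I_m -> R) (M : nat) : in_simplex p -> (0 < M)%N ->
  forall i, `|((Num.truncn (M%:R * p i)).+1)%:R
              / (\sum_j (Num.truncn (M%:R * p j)).+1)%N%:R - p i| <= m%:R / M%:R.
Proof.
move=> sp M0 i.
have [p0 p1] := sp.
have m1 : (1 <= m)%N := simplex_pos sp.
set k := fun j => (Num.truncn (M%:R * p j)).+1.
have kb : forall j, M%:R * p j < (k j)%:R <= M%:R * p j + 1.
  move=> j; have := truncn_itv (mulr_ge0 (ler0n _ M) (ltW (p0 j))).
  by rewrite /k => /andP[a b]; rewrite b /= -natr1 lerD2r.
rewrite -/(k i).
set NR := ((\sum_j k j)%N)%:R : R.
have NRe : NR = \sum_j (k j)%:R by rewrite /NR natr_sum.
have MN : M%:R <= NR.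
  have -> : M%:R = \sum_j M%:R * p j :> R by rewrite -mulr_sumr p1 mulr1.
  rewrite NRe; apply: ler_sum => j _.
  by have /andP[/ltW] := kb j.
have NM : NR <= M%:R + m%:R.
  have -> : M%:R = \sum_j M%:R * p j :> R by rewrite -mulr_sumr p1 mulr1.
  rewrite NRe.
  have -> : (m%:R : R) = \sum_(j < m) 1 by rewrite sumr_const card_ord.
  rewrite -big_split; apply: ler_sum => j _.
  by have /andP[_] := kb j.
have M0' : 0 < M%:R :> R by rewrite ltr0n.
have NR0 : 0 < NR by apply: lt_le_trans MN.
have /andP[pi0 pi1] := simplex_le1 sp i.
have /andP[kl ku] := kb i.
have bnd : `|(k i)%:R - NR * p i| <= m%:R.
  rewrite ler_norml; apply/andP; split.
    have : NR * p i <= (M%:R + m%:R) * p i by apply: ler_wpM2r.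
    have : m%:R * p i <= m%:R by rewrite ler_piMr ?ler0n.
    move=> H1 H2; nra.
  have : M%:R * p i <= NR * p i by apply: ler_wpM2r.
  have : (1 : R) <= m%:R by rewrite ler1n.
  move=> H1 H2; nra.
have -> : (k i)%:R / NR - p i = ((k i)%:R - NR * p i) / NR.
  by field; rewrite gt_eqF.
rewrite normrM normfV (gtr0_norm NR0).
apply: le_trans (ler_wpM2r _ bnd) _; first by rewrite invr_ge0 ltW.
by apply: ler_wpM2l; rewrite ?ler0n // lef_pV2 // posrE.
Qed.

End Approx2.

Section Main.
Variable R : realType.
Variable h : forall n : nat, ('I_n -> R) -> ('I_n -> R) -> ('I_n -> R) -> R.
Arguments h : clear implicits.
Hypothesis h_bil : forall n, (2 <= n)%N -> forall p : 'I_n -> R, in_simplex p ->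
     cotangent_bilinear (h n p).
Hypothesis Hii : forall m n, (2 <= m)%N -> (m <= n)%N ->
     forall (W : 'I_m -> 'I_n -> R) (V : 'I_n -> 'I_m -> R),
       markov_channel W -> markov_channel V ->
       (forall p : 'I_m -> R, in_simplex p ->
          forall x, markov_map V (markov_map W p) x = p x) ->
       forall p : 'I_m -> R, in_simplex p ->
       forall (A : 'I_m -> R) (B : 'I_n -> R),
         h m p A (markov_pullback W B)
         = h n (markov_map W p) (markov_pullback V A) B.

Definition unif N : 'I_N -> R := fun _ => (N%:R)^-1.
Arguments unif : clear implicits.

Lemma unif_simplex N : (0 < N)%N -> in_simplex (unif N).
Proof.
move=> N0; split=> [i|]; first by rewrite /unif invr_gt0 ltr0n.
rewrite /unif sumr_const card_ord -[_^-1 *+ N]mulr_natr mulVf //.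
by rewrite pnatr_eq0 -lt0n.
Qed.

Lemma inv_eq N (s : 'I_N -> 'I_N) : involutive s -> forall x y, (y == s x) = (x == s y).
Proof. by move=> sK x y; apply/eqP/eqP => ->; rewrite sK. Qed.

Lemma perm_inv N (s : 'I_N -> 'I_N) : (2 <= N)%N -> involutive s ->
  forall A B, h N (unif N) A (fun x => B (s x)) = h N (unif N) (fun y => A (s y)) B.
Proof.
move=> N2 sK A B.
pose W : 'I_N -> 'I_N -> R := fun x y => (y == s x)%:R.
have HW : markov_channel W.
  split=> [x y|x|y]; first by rewrite /W ler0n.
    exact: sum_ind1.
  by exists (s y); rewrite /W sK eqxx ltr01.
have PB : forall C, markov_pullback W C = (fun x => C (s x)).
  move=> C; apply: functional_extensionality => x.
  by rewrite /markov_pullback /W sum_ind.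
have MM : forall p x, markov_map W p x = p (s x).
  move=> p x; rewrite /markov_map /W.
  under eq_bigr => i _ do rewrite (inv_eq sK).
  by rewrite sum_ind.
have := @Hii N N N2 (leqnn N) W W HW HW _ (unif N) (unif_simplex (ltnW N2)) A B.
rewrite !PB.
have -> : markov_map W (unif N) = unif N.
  by apply: functional_extensionality => x; rewrite MM.
apply.
by move=> p _ x; rewrite MM MM sK.
Qed.

Definition HH N (i j : 'I_N) := h N (unif N) (ee i) (ee j).

Lemma HH_inv N (s : 'I_N -> 'I_N) : (2 <= N)%N -> involutive s ->
  forall i j, HH (s i) (s j) = HH i j.
Proof.
move=> N2 sK i j; rewrite /HH.
have := perm_inv N2 sK (ee i) (ee (s j)).
have -> : (fun x => ee (s j) (s x)) = ee (R:=R) j.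
  apply: functional_extensionality => x; rewrite /ee.
  by rewrite (inj_eq (can_inj sK)).
have -> : (fun y : 'I_N => ee i (s y)) = ee (R:=R) (s i).
  apply: functional_extensionality => x; rewrite /ee.
  by rewrite eq_sym (inv_eq sK) eq_sym.
by move=> ->.
Qed.

Lemma HH_diag N (a i : 'I_N) : (2 <= N)%N -> HH i i = HH a a.
Proof.
move=> N2; have := HH_inv N2 (tpermK a i) a a; by rewrite tpermL.
Qed.

Lemma HH_off N (a b i j : 'I_N) : (2 <= N)%N -> a != b -> i != j -> HH i j = HH a b.
Proof.
move=> N2 ab ij.
have E1 := HH_inv N2 (tpermK a i) a b; rewrite tpermL in E1.
set j1 := tperm a i b in E1.
have j1i : j1 != i.
  by rewrite /j1 -{2}(tpermL a i) (inj_eq (can_inj (tpermK a i))) eq_sym.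
have E2 := HH_inv N2 (tpermK j1 j) i j1; rewrite tpermL tpermD in E2.
- by rewrite E2 E1.
- by [].
- by rewrite eq_sym.
Qed.


Definition cu N : R := if N is n.+2 then
   (n.+2)%:R * (HH (@ord0 n.+1) ord0 - HH (@ord0 n.+1) ord_max) else 0.

Lemma unif_formula N : (2 <= N)%N -> forall A B,
  h N (unif N) A B = cu N * fisher (unif N) A B.
Proof.
case: N => [|[|n]] // N2 A B.
set N := n.+2 in N2 A B *.
pose a : 'I_N := ord0; pose b : 'I_N := ord_max.
have ab : a != b by [].
set Ha := HH a a; set Hb := HH a b.
have HHf : forall i j : 'I_N, HH i j = Hb + (Ha - Hb) * (j == i)%:R.
  move=> i j; have [->|ji] := eqVneq j i.
    by rewrite (HH_diag a i N2) /= mulr1 addrC subrK.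
  by rewrite mulr0 addr0 (@HH_off N a b i j N2 ab) // eq_sym.
have su := unif_simplex (ltnW N2).
have [b1 b2 b3 b4] := h_bil N2 su.
have exp1 : forall A B, h N (unif N) A B = \sum_i A i * h N (unif N) (ee i) B.
  move=> A' B'; exact: (lin_expand (F := fun A => h N (unif N) A B') (fun a A A' => b1 a A A' B') A').
have exp2 : forall i B, h N (unif N) (ee i) B = \sum_j B j * HH i j.
  move=> i B'; exact: (lin_expand (F := h N (unif N) (ee i)) (fun a B B' => b2 a (ee i) B B') B').
have row : \sum_j HH a j = 0.
  have := exp2 a (fun _ => 1).
  have -> : h N (unif N) (ee a) (fun _ => 1) = 0.
    have -> : (fun _ : 'I_N => (1:R)) = (fun x => (fun _ => 0) x + 1).
      by apply: functional_extensionality => x; rewrite add0r.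
    rewrite b4; exact: (lin_zero (F := h N (unif N) (ee a)) (fun c B B' => b2 c (ee a) B B')).
  by move=> E; rewrite [RHS]E; apply: eq_bigr => j _; rewrite mul1r.
have rowE : N%:R * Hb + (Ha - Hb) = 0.
  rewrite -row (eq_bigr (fun j : 'I_N => Hb + (Ha - Hb) * (j == a)%:R)); last by move=> j _; rewrite HHf.
  rewrite big_split /= sumr_const card_ord -mulr_sumr sum_ind1 mulr1 mulr_natl //.
have inner : forall i, \sum_j B j * HH i j = Hb * (\sum_j B j) + (Ha - Hb) * B i.
  move=> i; rewrite (eq_bigr (fun j => B j * Hb + (Ha - Hb) * (B j * (j == i)%:R))); last first.
    by move=> j _; rewrite HHf; ring.
  by rewrite big_split /= -mulr_suml -mulr_sumr sum_indr mulrC.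
rewrite exp1 (eq_bigr (fun i => Hb * (\sum_j B j) * A i + (Ha - Hb) * (A i * B i))); last first.
  by move=> i _; rewrite exp2 inner; ring.
rewrite big_split /= -mulr_sumr -mulr_sumr.
rewrite /cu -/N -/a -/b -/Ha -/Hb /fisher /unif.
have F1 : \sum_i N%:R^-1 * A i * B i = N%:R^-1 * \sum_i A i * B i.
  by rewrite mulr_sumr; apply: eq_bigr => i _; rewrite mulrA.
have F2 : forall C : 'I_N -> R, \sum_i N%:R^-1 * C i = N%:R^-1 * \sum_i C i.
  by move=> C; rewrite mulr_sumr.
rewrite F1 !F2.
have EHa : Ha = Hb - N%:R * Hb by lra.
have N0 : N%:R != 0 :> R by rewrite pnatr_eq0.
by rewrite EHa; field.
Qed.


Lemma fiber_sum m N (f : 'I_N -> 'I_m) (k : 'I_m -> nat)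
  (Hk : forall i, \sum_y ((f y == i)%:R : R) = (k i)%:R) x (G : 'I_m -> R) :
  \sum_y (f y == x)%:R * G (f y) = (k x)%:R * G x.
Proof.
rewrite (eq_bigr (fun y => (f y == x)%:R * G x)); last first.
  by move=> y _; have [->|] := eqVneq (f y) x; rewrite ?mul0r.
by rewrite -mulr_suml Hk.
Qed.

Lemma fiber_lemma m N (f : 'I_N -> 'I_m) (k : 'I_m -> nat) :
  (2 <= m)%N -> (m <= N)%N -> (forall i, 0 < k i)%N ->
  (forall i, \sum_y ((f y == i)%:R : R) = (k i)%:R) ->
  forall A B, h m (fun i => (k i)%:R / N%:R) A B
              = cu N * fisher (fun i => (k i)%:R / N%:R) A B.
Proof.
move=> m2 mN kpos Hk A B.
have N2 : (2 <= N)%N by apply: leq_trans mN.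
have N0 : N%:R != 0 :> R by rewrite pnatr_eq0 -lt0n (ltnW N2).
have k0 : forall i, (k i)%:R != 0 :> R by move=> i; rewrite pnatr_eq0 -lt0n.
have sumk : \sum_i ((k i)%:R : R) = N%:R.
  rewrite -(eq_bigr _ (fun i _ => Hk i)) exchange_big /=.
  rewrite (eq_bigr (fun _ => 1)); last by move=> y _; rewrite (eq_bigr (fun i => (i == f y)%:R)) ?sum_ind1 // => i _; rewrite eq_sym.
  by rewrite sumr_const card_ord.
pose p := fun i => (k i)%:R / N%:R : R.
have sp : in_simplex p.
  split=> [i|]; first by rewrite /p divr_gt0 // ltr0n ?(ltnW N2).
  by rewrite /p -mulr_suml sumk mulfV.
pose W : 'I_m -> 'I_N -> R := fun i y => (f y == i)%:R / (k i)%:R.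
pose V : 'I_N -> 'I_m -> R := fun y i => (f y == i)%:R.
have MW : forall q y, markov_map W q y = q (f y) / (k (f y))%:R.
  move=> q y; rewrite /markov_map /W.
  rewrite (eq_bigr (fun i => (i == f y)%:R * (q i / (k i)%:R))); last first.
    by move=> i _; rewrite eq_sym; ring.
  by rewrite sum_ind.
have HW : markov_channel W.
  split=> [i y|i|y].
  - by rewrite /W divr_ge0 ?ler0n.
  - by rewrite /W -mulr_suml Hk mulfV.
  - by exists (f y); rewrite /W eqxx mul1r invr_gt0 ltr0n.
have HV : markov_channel V.
  split=> [y i|y|i].
  - by rewrite /V ler0n.
  - by rewrite /V (eq_bigr (fun i => (i == f y)%:R)) ?sum_ind1 // => i _; rewrite eq_sym.
  - case: (pickP (fun y => f y == i)) => [y Hy|none].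
      by exists y; rewrite /V Hy ltr01.
    have := Hk i; rewrite big1 => [E|y _]; last by rewrite none.
    by have := k0 i; rewrite -E eqxx.
have HVW : forall q : 'I_m -> R, in_simplex q -> forall x, markov_map V (markov_map W q) x = q x.
  move=> q _ x; rewrite {1}/markov_map /V.
  under eq_bigr => y _ do rewrite MW mulrC -mulrA mulrC.
  rewrite (eq_bigr (fun y => (f y == x)%:R * (q (f y) / (k (f y))%:R))); last by move=> y _; ring.
  by rewrite (fiber_sum Hk x (fun i => q i / (k i)%:R)) mulrC -mulrA mulVf ?mulr1.
have Wp : markov_map W p = unif N.
  apply: functional_extensionality => y; rewrite MW /p /unif.
  by rewrite mulrAC mulfV ?mul1r.
have PB : markov_pullback W (fun y => B (f y)) = B.
  apply: functional_extensionality => x; rewrite /markov_pullback /W.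
  rewrite (eq_bigr (fun y => (f y == x)%:R * (B (f y) / (k x)%:R))); last first.
    by move=> y _; have [->|] := eqVneq (f y) x; rewrite ?mul0r //; ring.
  by rewrite (fiber_sum Hk x (fun i => B i / (k x)%:R)) mulrC -mulrA mulVf ?mulr1.
rewrite -/p -{1}PB (Hii m2 mN HW HV HVW sp) Wp unif_formula //.
by rewrite -Wp -(fisher_inv HW HV HVW sp) PB.
Qed.


Lemma fisher_unif_e m (m2 : (2 <= m)%N) :
  fisher (unif m) (ee (Ordinal (ltnW m2))) (ee (Ordinal (ltnW m2))) != 0 :> R.
Proof.
set a : 'I_m := Ordinal (ltnW m2); rewrite /fisher /unif /ee.
rewrite (eq_bigr (fun i => (i == a)%:R * m%:R^-1)); last first.
  by move=> i _; case: (i == a); rewrite /= ?mulr1n ?mulr0n ?mulr1 ?mulr0 ?mul1r ?mul0r.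
rewrite sum_ind.
rewrite (eq_bigr (fun i => (i == a)%:R * m%:R^-1)); last first.
  by move=> i _; case: (i == a); rewrite /= ?mulr1n ?mulr0n ?mulr1 ?mulr0 ?mul1r ?mul0r.
rewrite sum_ind.
have mgt : (2 : R) <= m%:R by rewrite ler_nat.
have mi0 : 0 < m%:R^-1 :> R by rewrite invr_gt0; lra.
have mi1 : m%:R^-1 < 1 :> R by rewrite invf_lt1; lra.
rewrite subr_eq0; apply/eqP => E.
have : m%:R^-1 * (1 - m%:R^-1) = 0 :> R by rewrite mulrBr mulr1 -E subrr.
by move/eqP; rewrite mulf_eq0 subr_eq0 !gt_eqF //= eq_sym lt_eqF.
Qed.

Lemma cu_mult m k : (2 <= m)%N -> (0 < k)%N -> cu m = cu (m * k).
Proof.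
move=> m2 k0.
have [N [f [HN Hk]]] := fiber_exists R (fun _ : 'I_m => k).
rewrite sum_nat_const card_ord in HN.
have mN : (m <= N)%N by rewrite HN leq_pmulr.
have := fiber_lemma m2 mN (fun _ => k0) Hk.
have -> : (fun _ : 'I_m => k%:R / N%:R) = unif m :> ('I_m -> R).
  apply: functional_extensionality => i; rewrite /unif HN natrM.
  have k0' : k%:R != 0 :> R by rewrite pnatr_eq0 -lt0n.
  have m0' : m%:R != 0 :> R by rewrite pnatr_eq0 -lt0n (ltnW m2).
  by rewrite invfM mulrCA mulfV ?mulr1.
move=> H; have := H (ee (Ordinal (ltnW m2))) (ee (Ordinal (ltnW m2))).
rewrite unif_formula // -HN => /eqP; rewrite -subr_eq0 -mulrBl mulf_eq0.
by rewrite (negbTE (fisher_unif_e m2)) orbF subr_eq0 => /eqP.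
Qed.

Lemma cu_eq n : (2 <= n)%N -> cu n = cu 2.
Proof.
move=> n2; rewrite (@cu_mult n 2 n2 isT) (@cu_mult 2 n (leqnn 2) (ltnW n2)).
by rewrite mulnC.
Qed.

Lemma rational m (k : 'I_m -> nat) : (2 <= m)%N -> (forall i, 0 < k i)%N ->
  forall A B, h m (fun i => (k i)%:R / (\sum_j k j)%N%:R) A B
            = cu 2 * fisher (fun i => (k i)%:R / (\sum_j k j)%N%:R) A B.
Proof.
move=> m2 kpos A B.
have [N [f [HN Hk]]] := fiber_exists R k.
have mN : (m <= N)%N.
  rewrite HN; apply: (@leq_trans (\sum_(i < m) 1)); last by apply: leq_sum => i _; apply: kpos.
  by rewrite sum_nat_const card_ord muln1.
rewrite -HN (fiber_lemma m2 mN kpos Hk) cu_eq //.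
exact: leq_trans mN.
Qed.

Hypothesis h_cont : forall n, (2 <= n)%N -> forall A B : 'I_n -> R,
     continuous_on_simplex (fun p => h n p A B).

Lemma density n (p : 'I_n -> R) : (2 <= n)%N -> in_simplex p -> forall A B,
  h n p A B = cu 2 * fisher p A B.
Proof.
move=> n2 sp A B.
set c := cu 2.
suff small : forall e : R, 0 < e -> `|h n p A B - c * fisher p A B| < e.
  apply/eqP; rewrite -subr_eq0; apply/negPn/negP => D0.
  have Dp : 0 < `|h n p A B - c * fisher p A B| by rewrite normr_gt0.
  by have := small _ Dp; rewrite ltxx.
move=> e e0.
have e20 : 0 < e / 2 by rewrite divr_gt0.
have [delta d0 Hd] := h_cont n2 A B sp e20.
set K := lipK A B.
have K0 : 0 <= K by rewrite /K /lipK addr_ge0 ?sumr_ge0 // mulr_ge0 // mulr_ge0 // sumr_ge0.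
set r := Num.min delta (e / (2 * (`|c| * K + 1))).
have cK0 : 0 < `|c| * K + 1 by rewrite ltr_pwDr // mulr_ge0.
have r0 : 0 < r by rewrite lt_min d0 /= divr_gt0 // mulr_gt0.
set M := (Num.truncn (n%:R / r)).+1.
have M0 : (0 < M)%N by [].
have MR0 : 0 < M%:R :> R by rewrite ltr0n.
have nMr : n%:R / M%:R < r.
  have := truncnS_gt (n%:R / r); rewrite -/M => H.
  rewrite ltr_pdivrMr // mulrC -ltr_pdivrMr //.
pose k := fun i => (Num.truncn (M%:R * p i)).+1.
pose q := fun i => (k i)%:R / (\sum_j k j)%N%:R : R.
have Hq : forall i, `|q i - p i| <= n%:R / M%:R by move=> i; exact: approx.
have N0 : 0 < (\sum_j k j)%N%:R :> R.
  by rewrite ltr0n (bigD1 (Ordinal (ltnW n2))) //=.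
have sq : in_simplex q.
  split=> [i|]; first by rewrite /q divr_gt0 // ltr0n.
  by rewrite /q -mulr_suml -natr_sum mulfV // gt_eqF.
have Hqd : forall i, `|q i - p i| < delta.
  move=> i; apply: le_lt_trans (Hq i) _; apply: lt_le_trans nMr _.
  by rewrite ge_min lexx.
have Dq := rational n2 (fun i => isT : (0 < k i)%N) A B; rewrite -/q in Dq.
have H1 := Hd q sq (fun i => Hqd i).
have H2 := fisher_lip A B sp sq Hq; rewrite -/K in H2.
have H3 : `|c| * (n%:R / M%:R * K) <= e / 2.
  have rle : r <= e / (2 * (`|c| * K + 1)) by rewrite ge_min lexx orbT.
  have : `|c| * (n%:R / M%:R * K) <= (`|c| * K + 1) * r.
    have : n%:R / M%:R * K <= r * K by apply: ler_wpM2r => //; apply: ltW.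
    have : 0 <= `|c| by [].
    have : 0 <= n%:R / M%:R * K by rewrite mulr_ge0 // divr_ge0 // ler0n.
    move=> a1 a2 a3; nra.
  move=> H; apply: le_trans H _.
  apply: le_trans (ler_wpM2l (ltW cK0) rle) _.
  rewrite le_eqVlt; apply/orP; left; apply/eqP; field.
  by rewrite gt_eqF.
have -> : h n p A B - c * fisher p A B
        = (h n p A B - h n q A B) - c * (fisher p A B - fisher q A B).
  by rewrite Dq -/c; ring.
apply: le_lt_trans (ler_normB _ _) _.
rewrite normrM distrC (distrC (fisher p A B)).
have : `|c| * `|fisher q A B - fisher p A B| <= `|c| * (n%:R / M%:R * K).
  by apply: ler_wpM2l.
move=> H4; lra.
Qed.


End Main.

Unset Implicit Arguments.
Theorem mainTheorem13 (R : realType)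
  (h : forall n : nat, ('I_n -> R) -> ('I_n -> R) -> ('I_n -> R) -> R)
  (h_bil : forall n, (2 <= n)%N -> forall p : 'I_n -> R, in_simplex p ->
     cotangent_bilinear (h n p))
  (h_sym : forall n, (2 <= n)%N -> forall p : 'I_n -> R, in_simplex p ->
     cotangent_symmetric (h n p))
  (h_nondeg : forall n, (2 <= n)%N -> forall p : 'I_n -> R, in_simplex p ->
     nondegenerate_form (h n p))
  (h_cont : forall n, (2 <= n)%N -> forall A B : 'I_n -> R,
     continuous_on_simplex (fun p => h n p A B)) :
  (exists2 c : R, c != 0 &
     forall n, (2 <= n)%N -> forall p : 'I_n -> R, in_simplex p ->
       forall A B, h n p A B = c * fisher p A B)
  <->
  (forall m n, (2 <= m)%N -> (m <= n)%N ->
     forall (W : 'I_m -> 'I_n -> R) (V : 'I_n -> 'I_m -> R),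
       markov_channel W -> markov_channel V ->
       (forall p : 'I_m -> R, in_simplex p ->
          forall x, markov_map V (markov_map W p) x = p x) ->
       forall p : 'I_m -> R, in_simplex p ->
       forall (A : 'I_m -> R) (B : 'I_n -> R),
         h m p A (markov_pullback W B)
         = h n (markov_map W p) (markov_pullback V A) B).
Proof.
split.
- case=> c c0 H m n m2 mn W V HW HV HVW p sp A B.
  have n2 : (2 <= n)%N := leq_trans m2 mn.
  rewrite (H m m2 p sp) (H n n2 _ (markov_simplex HW sp)).
  by rewrite (fisher_inv HW HV HVW sp).
- move=> Hii; exists (cu h 2).
  + apply/eqP => c0.
    have su := unif_simplex R (isT : (0 < 2)%N).
    have := h_nondeg 2 (leqnn 2) _ su (ee (@ord0 1)).
    case.
      by move=> B; rewrite (unif_formula h_bil Hii (leqnn 2)) c0 mul0r.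
    move=> c' Hc'.
    have := Hc' ord0; have := Hc' ord_max; rewrite /ee /= => a b.
    by rewrite -a in b; move/eqP: b; rewrite oner_eq0.
  + move=> n n2 p sp A B; exact: (density h_bil Hii h_cont n2 sp A B).
Qed.
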